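(* There exist constants $\varepsilon>0$ and $C>0$ such that $\tilde g(n)\le C(2-\varepsilon)^n$ for all positive integers $n$.
   Context: $[n]_0=\{0,1,\dots,n\}$, $S_1+S_2=\{u+v:u\in S_1,v\in S_2\}$. $\tilde g(n)$ is the sum of $2^{-|(S_1+S_2)\cap[n]_0|}$ over all pairs $S_1,S_2\subseteq[n]_0$ such that $0\in S_1\cap S_2$, $n+1\notin S_1+S_2$, and $k\in S_1+S_2$ for every integer $k$ with $\frac{3n}{4}+1\le k\le\frac{15n}{16}$. *)

(* Defs.v *)
From mathcomp Require Import all_boot all_order all_algebra.
Set Implicit Arguments. Unset Strict Implicit. Unset Printing Implicit Defensive.
Import Order.TTheory GRing.Theory Num.Theory.

(* Subsets of [n]_0 = {0,...,n} are represented as {set 'I_n.+1}. *)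

Definition in_sumset (n : nat) (S1 S2 : {set 'I_n.+1}) (k : nat) : bool :=
  [exists u : 'I_n.+1, [exists v : 'I_n.+1,
     [&& u \in S1, v \in S2 & (u + v == k)%N]]].

Definition sumset_card_le_n (n : nat) (S1 S2 : {set 'I_n.+1}) : nat :=
  #|[set k : 'I_n.+1 | in_sumset S1 S2 k]|.

Definition gt_admissible (n : nat) (S1 S2 : {set 'I_n.+1}) : bool :=
  [&& (ord0 \in S1), (ord0 \in S2), ~~ in_sumset S1 S2 n.+1 &
      [forall k : 'I_(2 * n).+1,
        ((3 * n <= 4 * (k - 1)) && (16 * k <= 15 * n) && (1 <= k))%N
          ==> in_sumset S1 S2 k]].

Definition gtilde (n : nat) : rat :=
  (\sum_(S1 : {set 'I_n.+1}) \sum_(S2 : {set 'I_n.+1} | gt_admissible S1 S2)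
     (2%:R ^- sumset_card_le_n S1 S2))%R.

(* Main.v *)
Require Import Defs.
From mathcomp Require Import all_boot all_order all_algebra.
From mathcomp Require Import reals.
From mathcomp Require Import zify ring lra.
Set Implicit Arguments. Unset Strict Implicit. Unset Printing Implicit Defensive.
Import Order.TTheory GRing.Theory Num.Theory.

Definition St : finType := ((bool*bool*bool)*(bool*bool*bool))%type.
Definition d0 : St := ((false,false,false),(false,false,false)).
Definition wn (z : St) : nat := let: ((al,bl,tl),(ah,bh,th)) := z in if ~~ bl && ~~ th then 7 else 5.
Definition okpos (x : bool*bool*bool) := let: (a,b,t) := x in ~~ (t && (a || b)).
Definition okst (z : St) := let: ((al,bl,tl),(ah,bh,th)) := z in
  [&& okpos z.1, okpos z.2, ~~ (al && bh) & ~~ (ah && bl)].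
Definition compat (y z : St) := let: ((_,bly,_),(_,_,thy)) := y in let: ((_,_,tlz),(_,bhz,_)) := z in
  ~~ (bly && tlz) && ~~ (bhz && thy).
Definition cheap (z : St) := let: ((al,bl,tl),_) := z in okst z && ~~ al && ~~ bl.
Definition startS (z : St) := let: ((al,bl,tl),_) := z in okst z && al.
Definition okat (s : nat) (y z : St) (q : nat) :=
  if q.+1 < s then cheap z else if q.+1 == s then startS z else okst z && compat y z.

Definition bs := [:: true; false].
Definition B2 : seq (bool*bool) := [seq (a,b) | a <- bs, b <- bs].
Definition B3 : seq (bool*bool*bool) := [seq (p,c) | p <- B2, c <- bs].
Definition Sts : seq St := [seq (x,y) | x <- B3, y <- B3].
Lemma Sts_perm : perm_eq (index_enum St) Sts.
Proof.
apply: uniq_perm; first exact: index_enum_uniq; first by vm_compute.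
move=> z; rewrite mem_index_enum; case: z => [[[[] []] []] [[[] []] []]]; by vm_compute.
Qed.
Lemma sumSts (P : pred St) (F : St -> nat) : \sum_(z | P z) F z = \sum_(z <- Sts | P z) F z.
Proof. exact: perm_big Sts_perm. Qed.
Lemma P1 y : 4 * (\sum_(z | okst z && compat y z) wn z) <= 63 * wn y.
Proof. rewrite sumSts unlock. case: y => [[[[] []] []] [[[] []] []]]; vm_compute; reflexivity. Qed.
Lemma P2 : 4 * (\sum_(z | cheap z) wn z) <= 63 * 5.
Proof. rewrite sumSts unlock. by vm_compute. Qed.
Lemma P3 : 4 * (\sum_(z | startS z) wn z) <= 63 * 5.
Proof. rewrite sumSts unlock. by vm_compute. Qed.
Lemma wn_ge5 z : 5 <= wn z.
Proof. by case: z => [[[? ?] ?] [[? ?] ?]] /=; case: ifP. Qed.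

Local Open Scope ring_scope.
Definition lam : rat := 63%:R / 4%:R.
Definition w (z : St) : rat := (wn z)%:R / 5%:R.

Lemma w_ge1 z : 1 <= w z.
Proof.
rewrite /w ler_pdivlMr ?ltr0n // mul1r ler_nat; exact: wn_ge5.
Qed.
Lemma w_ge0 z : 0 <= w z.
Proof. exact: le_trans (w_ge1 z). Qed.

Lemma sum_w (P : pred St) : \sum_(z | P z) w z = (\sum_(z | P z) wn z)%:R / 5%:R.
Proof. by rewrite natr_sum mulr_suml. Qed.

Lemma Pw1 y : \sum_(z | okst z && compat y z) w z <= lam * w y.
Proof.
rewrite sum_w /lam /w; have := P1 y; rewrite -(ler_nat rat) !natrM.
set X := (_)%:R; set Y := (wn y)%:R => H; lra.
Qed.
Lemma Pw2 : \sum_(z | cheap z) w z <= lam.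
Proof.
rewrite sum_w /lam; have := P2; rewrite -(ler_nat rat) !natrM.
set X := (_)%:R => H; lra.
Qed.
Lemma Pw3 : \sum_(z | startS z) w z <= lam.
Proof.
rewrite sum_w /lam; have := P3; rewrite -(ler_nat rat) !natrM.
set X := (_)%:R => H; lra.
Qed.

Definition get m (f : {ffun 'I_m -> St}) (k : nat) : St :=
  if (insub k : option 'I_m) is Some i then f i else d0.

Lemma getE m (f : {ffun 'I_m -> St}) k (Hk : (k < m)%N) : get f k = f (Ordinal Hk).
Proof. by rewrite /get insubT. Qed.
Lemma getF m (f : {ffun 'I_m -> St}) k : (m <= k)%N -> get f k = d0.
Proof. by move=> Hk; rewrite /get insubF // ltnNge Hk. Qed.

Definition ext m (g : {ffun 'I_m -> St}) (z : St) : {ffun 'I_m.+1 -> St} :=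
  [ffun i : 'I_m.+1 => if (i < m)%N then get g i else z].

Lemma get_ext m (g : {ffun 'I_m -> St}) z k :
  get (ext g z) k = if (k < m)%N then get g k else if k == m then z else d0.
Proof.
case: (ltnP k m.+1) => Hk.
  rewrite (getE _ Hk) ffunE /=; case: (ltnP k m) => H //.
  have E : k = m by lia.
  by rewrite E eqxx.
rewrite getF //; have -> : (k < m)%N = false by apply/negbTE; rewrite -leqNgt ltnW.
have E : (k == m) = false by lia.
by rewrite E.
Qed.

Definition restr m (f : {ffun 'I_m.+1 -> St}) : {ffun 'I_m -> St} :=
  [ffun i : 'I_m => f (widen_ord (leqnSn m) i)].

Lemma sum_ffunS m (G : {ffun 'I_m.+1 -> St} -> rat) :
  \sum_f G f = \sum_(g : {ffun 'I_m -> St}) \sum_(z : St) G (ext g z).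
Proof.
rewrite pair_big /=.
rewrite (reindex (fun p : {ffun 'I_m -> St} * St => ext p.1 p.2)) //.
exists (fun f => (restr f, f ord_max)).
  move=> [g z] _ /=; congr (_, _).
    apply/ffunP => i; rewrite !ffunE /= ltn_ord.
    by rewrite (getE _ (ltn_ord i)); congr (g _); apply: val_inj.
  by rewrite ffunE /= ltnn.
move=> f _ /=; apply/ffunP => i; rewrite ffunE; case: ifP => Hi.
  by rewrite (getE _ Hi) ffunE; congr (f _); apply: val_inj.
congr (f _); apply: val_inj => /=; have := ltn_ord i; lia.
Qed.

Definition valid s m (f : {ffun 'I_m -> St}) : bool :=
  all (fun q => okat s (get f (q - s)) (get f q) q) (iota 0 m).

Lemma okat_ext s m (g : {ffun 'I_m -> St}) z z' : (0 < s)%N ->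
  okat s (get (ext g z') (m - s)) z m = okat s (get g (m - s)) z m.
Proof.
move=> s0; rewrite /okat; case: ltnP => // H1; case: eqP => // H2.
by rewrite get_ext ifT //; lia.
Qed.

Lemma valid_ext s m (g : {ffun 'I_m -> St}) z : (0 < s)%N ->
  valid s (ext g z) = valid s g && okat s (get g (m - s)) z m.
Proof.
move=> s0; have E : iota 0 m.+1 = iota 0 m ++ [:: m] by rewrite -addn1 iotaD.
rewrite /valid E all_cat /= andbT.
rewrite okat_ext // get_ext ltnn eqxx; congr andb.
apply: eq_in_all => q; rewrite mem_iota add0n => /andP [_ Hq].
rewrite !get_ext Hq ifT //; lia.
Qed.

Definition win s m (f : {ffun 'I_m -> St}) : rat := \prod_(m - s <= k < m) w (get f k).

Lemma win_ge1 s m (f : {ffun 'I_m -> St}) : 1 <= win s f.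
Proof.
rewrite /win; apply: (big_ind (fun x : rat => 1 <= x)) => // [x y|k _].
  exact: mulr_ege1.
exact: w_ge1.
Qed.
Lemma win_ge0 s m (f : {ffun 'I_m -> St}) : 0 <= win s f.
Proof. exact: le_trans (win_ge1 s f). Qed.

Lemma win_ext s m (g : {ffun 'I_m -> St}) z : (0 < s)%N ->
  win s (ext g z) = (\prod_(m.+1 - s <= k < m) w (get g k)) * w z.
Proof.
move=> s0; rewrite /win big_nat_recr /=; last by lia.
rewrite get_ext ltnn eqxx; congr (_ * _).
apply: eq_big_nat => k /andP [_ Hk]; by rewrite get_ext Hk.
Qed.


Definition F s m : rat := \sum_(f : {ffun 'I_m -> St} | valid s f) win s f.

Lemma lam_ge0 : 0 <= lam.
Proof. by rewrite /lam divr_ge0 ?ler0n. Qed.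

Lemma chain_bound s m : (0 < s)%N -> F s m <= lam ^+ m.
Proof.
move=> s0; elim: m => [|m IH].
  rewrite /F expr0.
  pose f0 : {ffun 'I_0 -> St} := [ffun i => d0].
  rewrite (big_pred1 f0); first by rewrite /win big_geq.
  move=> f /=; rewrite /valid /=; apply/esym/eqP/ffunP => -[] //.
rewrite /F big_mkcond sum_ffunS exprS.
apply: (@le_trans _ _ (\sum_(g : {ffun 'I_m -> St}) lam * (if valid s g then win s g else 0))); last first.
  rewrite -mulr_sumr -big_mkcond.
  apply: ler_wpM2l; first exact: lam_ge0.
  exact: IH.
apply: ler_sum => g _.
under eq_bigr => z _ do rewrite (valid_ext _ _ s0) (win_ext _ _ s0).
case: (boolP (valid s g)) => Vg; last first.
  rewrite big1 ?mulr0 // => z _; by rewrite andFb.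
rewrite mulrC.
have -> : \sum_(z : St) (if true && okat s (get g (m - s)) z m
                          then (\prod_(m.+1 - s <= k < m) w (get g k)) * w z else 0)
        = (\prod_(m.+1 - s <= k < m) w (get g k)) * \sum_(z | okat s (get g (m - s)) z m) w z.
  by rewrite mulr_sumr [RHS]big_mkcond; apply: eq_bigr => z _ /=; case: ifP; rewrite ?mulr0.
have Pge0 : 0 <= \prod_(m.+1 - s <= k < m) w (get g k).
  by apply: prodr_ge0 => k _; exact: w_ge0.
case: (leqP s m) => Hsm.
  have -> : win s g = w (get g (m - s)) * \prod_(m.+1 - s <= k < m) w (get g k).
    rewrite /win big_ltn; last by lia.
    by have -> : (m - s).+1 = (m.+1 - s)%N by lia.
  rewrite [w _ * _]mulrC -mulrA; apply: ler_wpM2l; first exact: Pge0.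
  rewrite mulrC /okat.
  have -> : (m.+1 < s)%N = false by lia.
  have -> : (m.+1 == s) = false by lia.
  exact: Pw1.
have -> : win s g = \prod_(m.+1 - s <= k < m) w (get g k).
  by rewrite /win; have -> : (m - s = m.+1 - s)%N by lia.
apply: ler_wpM2l; first exact: Pge0.
rewrite /okat; have [H|H] := boolP (m.+1 < s)%N.
  exact: Pw2.
have -> : (m.+1 == s) = true by lia.
exact: Pw3.
Qed.


Lemma count_valid s m : (0 < s)%N ->
  (#|[set f : {ffun 'I_m -> St} | valid s f]|)%:R <= lam ^+ m.
Proof.
move=> s0; rewrite -sum1dep_card natr_sum; apply: le_trans (chain_bound m s0).
by apply: ler_sum => f _; exact: win_ge1.
Qed.

Local Close Scope ring_scope.
Section Sem.
Variable n : nat.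
Local Notation I := 'I_n.+1.
Definition Trip : finType := (({set I} * {set I}) * {set I})%type.

Definition inS (S : {set I}) (k : nat) : bool := (k < n.+1)%N && (inord k \in S).
Definition Aset (S1 S2 : {set I}) := [set k : I | in_sumset S1 S2 k].
Definition good (x : Trip) := [&& ord0 \in x.1.1, ord0 \in x.1.2,
  ~~ in_sumset x.1.1 x.1.2 n.+1 & x.2 \subset ~: Aset x.1.1 x.1.2].
Definition minok (x : Trip) (s : nat) := [forall j : I,
  ((0 < j) && (j < s))%N ==> (j \notin x.1.1) && (j \notin x.1.2)].
Definition D1 s := [set x : Trip | [&& good x, inS x.1.1 s & minok x s]].
Definition D2 s := [set x : Trip | [&& good x, inS x.1.2 s & minok x s]].
Definition D0 := [set x : Trip | [&& good x, x.1.1 == [set ord0] & x.1.2 == [set ord0]]].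

Definition state (x : Trip) (i : nat) : bool * bool * bool := (inS x.1.1 i, inS x.1.2 i, inS x.2 i).
Definition encf (x : Trip) : {ffun 'I_(n %/ 2) -> St} :=
  [ffun q : 'I_(n %/ 2) => (state x q.+1, state x (n - q))].
Definition enc (x : Trip) := (encf x, state x (n %/ 2).+1).

Lemma inS_ord S (j : I) : inS S j = (j \in S).
Proof. by rewrite /inS ltn_ord inord_val. Qed.

Lemma inS0 S : inS S 0 = (ord0 \in S).
Proof.
have E : inord 0 = ord0 :> I by apply: val_inj; rewrite /= inordK.
by rewrite /inS E.
Qed.

Lemma sum_in S1 S2 u v : inS S1 u -> inS S2 v -> in_sumset S1 S2 (u + v).
Proof.
move=> /andP [Hu Su] /andP [Hv Sv]; apply/existsP; exists (inord u); apply/existsP.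
by exists (inord v); rewrite Su Sv /= !inordK.
Qed.

Lemma T_out x k : good x -> inS x.2 k -> ~~ in_sumset x.1.1 x.1.2 k.
Proof.
case/and4P => _ _ _ sub /andP [Hk Tk]; have := subsetP sub _ Tk.
by rewrite !inE inordK.
Qed.

Lemma okpos_state x i : good x -> okpos (state x i).
Proof.
move=> g; rewrite /okpos /state; apply/negP => /andP [Ti H].
have := T_out g Ti; case/and4P: g => g1 g2 _ _.
case/orP: H => H.
  by rewrite -(addn0 i) sum_in // inS0.
by rewrite -(add0n i) sum_in // inS0.
Qed.

Lemma pair_out x u v : good x -> u + v = n.+1 -> inS x.1.1 u -> inS x.1.2 v -> False.
Proof.
move=> g E H1 H2; have := sum_in H1 H2; rewrite E.
by case/and4P: g => _ _ /negP.
Qed.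

Lemma okst_state x q : good x -> (q < n %/ 2)%N -> okst (state x q.+1, state x (n - q)).
Proof.
move=> g Hq; have P1 := okpos_state q.+1 g; have P2 := okpos_state (n - q) g.
move: P1 P2; rewrite /okst /okpos /state /= => -> -> /=.
apply/andP; split; apply/negP => /andP [H1 H2].
  by apply: (pair_out g _ H1 H2); have := leq_div n 2; lia.
by apply: (pair_out g _ H1 H2); have := leq_div n 2; lia.
Qed.

Lemma enc_valid s x : (0 < s)%N -> x \in D1 s -> valid s (encf x).
Proof.
move=> s0; rewrite inE => /and3P [g Ss mo].
have Hm := leq_div n 2.
apply/allP => q; rewrite mem_iota add0n => /andP [_ Hq].
have Hqs : (q - s < n %/ 2)%N by lia.
rewrite (getE _ Hq) (getE _ Hqs) !ffunE /=.
rewrite /okat; case: ltnP => H1.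
  rewrite /cheap okst_state //=.
  have := forallP mo (inord q.+1); rewrite inordK; last by lia.
  by rewrite H1 /= /inS => /andP [/negbTE -> /negbTE ->]; rewrite !andbF.
case: eqP => H2.
  by rewrite /startS okst_state //= H2.
rewrite okst_state //= /compat /=.
apply/andP; split; apply/negP => /andP [H3 H4]; have := T_out g H4.
  have -> : q.+1 = (s + (q - s).+1)%N by lia.
  by rewrite sum_in.
have -> : (n - (q - s) = s + (n - q))%N by lia.
by rewrite sum_in.
Qed.

Lemma T0 x : good x -> inS x.2 0 = false.
Proof.
move=> g; apply/negP => H; have := T_out g H.
rewrite -(addn0 0) sum_in // inS0; by case/and4P: g.
Qed.

Lemma state_eq0 x x' : good x -> good x' -> state x 0 = state x' 0.
Proof.
move=> g g'; rewrite /state (T0 g) (T0 g') !inS0.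
by case/and4P: (g) => -> -> _ _; case/and4P: (g') => -> -> _ _.
Qed.

Lemma enc_inj_good x x' : good x -> good x' -> enc x = enc x' -> x = x'.
Proof.
move=> g g' Heq; have E := congr1 fst Heq; have Emid := congr1 snd Heq; rewrite /= in E Emid.
have Hm := leq_div n 2.
have Hst : forall i, (i < n.+1)%N -> state x i = state x' i.
  move=> i Hi.
  case: (posnP i) => [->|i0]; first exact: state_eq0.
  case: (leqP i (n %/ 2)) => H1.
    have Hq : (i.-1 < n %/ 2)%N by lia.
    have := congr1 (fun f : {ffun 'I_(n %/ 2) -> St} => f (Ordinal Hq)) E; rewrite !ffunE /= prednK //.
    by move/(congr1 fst).
  case: (ltnP (n - i) (n %/ 2)) => H2.
    have := congr1 (fun f : {ffun 'I_(n %/ 2) -> St} => f (Ordinal H2)) E; rewrite !ffunE /=.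
    have -> : (n - (n - i) = i)%N by lia.
    by move/(congr1 snd).
  have -> : i = (n %/ 2).+1 by have := leq_trunc_div n 2; lia.
  exact: Emid.
clear Heq; move: x x' g g' E Emid Hst => [[S1 S2] T] [[S1' S2'] T'] /= _ _ _ _ Hst.
have H : forall j : I, [/\ (j \in S1) = (j \in S1'), (j \in S2) = (j \in S2') & (j \in T) = (j \in T')].
  move=> j; have := Hst j (ltn_ord j); rewrite /state /= !inS_ord; by case=> -> -> ->.
congr (_, _); first congr (_, _).
- by apply/setP => j; case: (H j).
- by apply/setP => j; case: (H j).
- by apply/setP => j; case: (H j).
Qed.

Lemma card_D1 s : (0 < s)%N ->
  #|D1 s| <= 8 * #|[set f : {ffun 'I_(n %/ 2) -> St} | valid s f]|.
Proof.
move=> s0.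
have inj : {in D1 s &, injective enc}.
  move=> x x'; rewrite !inE => /and3P [g _ _] /and3P [g' _ _]; exact: enc_inj_good.
rewrite -(card_in_imset inj).
have sub : enc @: D1 s \subset setX [set f : {ffun 'I_(n %/ 2) -> St} | valid s f] [set: bool * bool * bool].
  apply/subsetP => p /imsetP [x Hx ->]; rewrite in_setX inE in_setT andbT.
  exact: enc_valid.
apply: leq_trans (subset_leq_card sub) _.
by rewrite cardsX cardsT !card_prod card_bool mulnC.
Qed.

Lemma in_sumsetC (S1 S2 : {set I}) k : in_sumset S2 S1 k = in_sumset S1 S2 k.
Proof.
by apply/existsP/existsP => -[u /existsP [v /and3P [H1 H2 H3]]]; exists v;
  apply/existsP; exists u; rewrite H1 H2 addnC.
Qed.

Definition swap (x : Trip) : Trip := ((x.1.2, x.1.1), x.2).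

Lemma good_swap x : good (swap x) = good x.
Proof.
rewrite /good /swap /= in_sumsetC.
have -> : Aset x.1.2 x.1.1 = Aset x.1.1 x.1.2 by apply/setP => k; rewrite !inE in_sumsetC.
by case: (ord0 \in x.1.1); case: (ord0 \in x.1.2).
Qed.

Lemma card_D2 s : #|D2 s| <= #|D1 s|.
Proof.
have inj : injective swap by move=> [[a b] c] [[a' b'] c'] [-> -> ->].
rewrite -(card_imset _ inj); apply: subset_leq_card; apply/subsetP => y /imsetP [x Hx ->].
move: Hx; rewrite !inE good_swap /= => /and3P [-> -> mo] /=.
apply/forallP => j; apply/implyP => Hj; have := implyP (forallP mo j) Hj.
by rewrite andbC.
Qed.

Lemma card_D0 : #|D0| <= 2 ^ n.+1.
Proof.
have inj : {in D0 &, injective (fun x : Trip => x.2)}.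
  move=> [[a b] c] [[a' b'] c']; rewrite !inE /= => /and3P [_ /eqP -> /eqP ->] /and3P [_ /eqP -> /eqP ->] ->.
  by [].
rewrite -(card_in_imset inj).
have := subset_leq_card (_ : (fun x : Trip => x.2) @: D0 \subset powerset [set: I]).
rewrite card_powerset cardsT card_ord; apply.
by apply/subsetP => y _; rewrite powersetE subsetT.
Qed.

Lemma cover x : good x ->
  x \in D0 \/ exists s : I, (0 < s)%N /\ (x \in D1 s \/ x \in D2 s).
Proof.
move=> g.
case: (pickP (fun j : I => (0 < j)%N && ((j \in x.1.1) || (j \in x.1.2)))) => [j0 Pj0|none].
  right.
  case: (@arg_minnP _ j0 (fun j : I => (0 < j)%N && ((j \in x.1.1) || (j \in x.1.2))) (fun j : I => nat_of_ord j) Pj0) => s /andP [s0 Hs] smin.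
  exists s; split => //.
  have mo : minok x s.
    apply/forallP => j; apply/implyP => /andP [jp js].
    case: (boolP ((j \in x.1.1) || (j \in x.1.2))) => [Hj|].
      by have := smin j; rewrite jp Hj => /(_ isT); rewrite leqNgt js.
    by rewrite negb_or.
  case/orP: Hs => Hs; [left | right]; rewrite inE g inS_ord Hs /=; exact: mo.
left; rewrite inE g /=.
case/and4P: (g) => g1 g2 _ _.
apply/andP; split; apply/eqP/setP => j; rewrite inE.
  case: (posnP j) => [j0|j0].
    by have -> : j = ord0 by apply: val_inj. 
  have := none j; rewrite j0 /= => /norP [/negbTE -> _].
  by apply/esym/eqP => E; move: j0; rewrite E.
case: (posnP j) => [j0|j0].
  by have -> : j = ord0 by apply: val_inj.
have := none j; rewrite j0 /= => /norP [_ /negbTE ->].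
by apply/esym/eqP => E; move: j0; rewrite E.
Qed.

Lemma card_ind (T : finType) (A : {set T}) : #|A| = \sum_(x : T) (x \in A : nat).
Proof. by rewrite -sum1_card big_mkcond. Qed.

Lemma card_good : #|[set x : Trip | good x]| <=
  2 ^ n.+1 + \sum_(s : I | (0 < s)%N) 16 * #|[set f : {ffun 'I_(n %/ 2) -> St} | valid s f]|.
Proof.
apply: (@leq_trans (#|D0| + \sum_(s : I | (0 < s)%N) (#|D1 s| + #|D2 s|))); last first.
  apply: leq_add; first exact: card_D0.
  apply: leq_sum => s s0.
  have := card_D1 s0; have := card_D2 s; lia.
have -> : \sum_(s : I | (0 < s)%N) (#|D1 s| + #|D2 s|) =
    \sum_(x : Trip) \sum_(s : I | (0 < s)%N) ((x \in D1 s) + (x \in D2 s)).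
  rewrite exchange_big; apply: eq_bigr => s _; by rewrite !card_ind big_split.
rewrite card_ind (card_ind D0) -big_split /=; apply: leq_sum => x _.
rewrite inE; case: (boolP (good x)) => // g.
case: (cover g) => [->//|[s [s0 Hs]]].
rewrite (bigD1 s) //=; case: Hs => ->; lia.
Qed.

End Sem.


Local Open Scope ring_scope.

Lemma pow2_eq n (S1 S2 : {set 'I_n.+1}) :
  (2%:R : rat) ^- sumset_card_le_n S1 S2 = (#|powerset (~: Aset S1 S2)|)%:R / 2%:R ^+ n.+1.
Proof.
rewrite card_powerset natrX.
have H := cardsC (Aset S1 S2); rewrite card_ord in H.
have -> : (2%:R : rat) ^+ n.+1 = 2%:R ^+ #|Aset S1 S2| * 2%:R ^+ #|~: Aset S1 S2| by rewrite -exprD H.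
rewrite /sumset_card_le_n -/(Aset S1 S2) invfM mulrCA mulfV ?mulr1 //.
by rewrite expf_neq0 // pnatr_eq0.
Qed.

Lemma gtilde_le n : gtilde n <= (#|[set x : Trip n | good x]|)%:R / 2%:R ^+ n.+1.
Proof.
rewrite /gtilde.
apply: (@le_trans _ _ (\sum_(S1 : {set 'I_n.+1}) \sum_(S2 : {set 'I_n.+1})
   (if [&& ord0 \in S1, ord0 \in S2 & ~~ in_sumset S1 S2 n.+1] then
      (#|powerset (~: Aset S1 S2)|)%:R / 2%:R ^+ n.+1 else 0))).
  apply: ler_sum => S1 _; rewrite big_mkcond; apply: ler_sum => S2 _.
  rewrite -pow2_eq.
  case: ifP => [/and4P [-> -> -> _]//|_].
  case: ifP => // _; rewrite invr_ge0; apply: exprn_ge0; exact: ler0n.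
have E : (#|[set x : Trip n | good x]|)%N = \sum_(S1 : {set 'I_n.+1}) \sum_(S2 : {set 'I_n.+1})
   (if [&& ord0 \in S1, ord0 \in S2 & ~~ in_sumset S1 S2 n.+1] then #|powerset (~: Aset S1 S2)| else 0)%N.
  rewrite card_ind.
  have E1 : forall F : Trip n -> nat, \sum_(x : Trip n) F x =
      \sum_(S1 : {set 'I_n.+1}) \sum_(S2 : {set 'I_n.+1}) \sum_(T : {set 'I_n.+1}) F ((S1, S2), T).
    move=> F; rewrite pair_bigA pair_bigA; apply: eq_bigr => -[[S1 S2] T] _ //.
  rewrite E1.
  apply: eq_bigr => S1 _; apply: eq_bigr => S2 _.
  under eq_bigr => T _ do rewrite inE /good /=.
  case: (boolP (ord0 \in S1)) => h1; last by rewrite big1.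
  case: (boolP (ord0 \in S2)) => h2; last by rewrite big1.
  case: (boolP (in_sumset S1 S2 n.+1)) => h3; first by rewrite big1.
  rewrite /= card_ind; apply: eq_bigr => T _; by rewrite powersetE.
rewrite E natr_sum mulr_suml; apply: ler_sum => S1 _.
rewrite natr_sum mulr_suml; apply: ler_sum => S2 _.
by case: ifP => _; rewrite ?mul0r.
Qed.


Lemma good_bound n : (#|[set x : Trip n | good x]|)%:R <=
  (2%:R : rat) ^+ n.+1 + (n.+1)%:R * (16%:R * lam ^+ (n %/ 2)).
Proof.
apply: le_trans (_ : ((2 ^ n.+1 + \sum_(s : 'I_n.+1 | (0 < s)%N)
    16 * #|[set f : {ffun 'I_(n %/ 2) -> St} | valid s f]|)%N)%:R <= _).
  by rewrite ler_nat; exact: card_good.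
rewrite natrD natrX lerD2l natr_sum.
apply: le_trans (_ : \sum_(s : 'I_n.+1) (16%:R * lam ^+ (n %/ 2)) <= _); last first.
  rewrite sumr_const card_ord (mulr_natl _ n.+1); exact: lexx.
rewrite big_mkcond; apply: ler_sum => s _.
case: ifP => s0.
  rewrite natrM; apply: ler_wpM2l; first exact: ler0n.
  exact: count_valid.
by apply: mulr_ge0; [exact: ler0n | apply: exprn_ge0; exact: lam_ge0].
Qed.


Lemma bernoulli n : 1 + n%:R / 397%:R <= (398%:R / 397%:R : rat) ^+ n.
Proof.
elim: n => [|n IH].
  rewrite mul0r addr0 expr0. exact: lexx.
rewrite exprS.
have hb : (398%:R / 397%:R : rat) = 1 + 397%:R^-1.
  field; exact: isT.
rewrite hb in IH *.
move: IH; move: ((1 + 397%:R^-1 : rat) ^+ n) => X IH.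
rewrite -natr1 mulrDl mul1r.
have h : 0 <= (n%:R : rat) := ler0n _ _.
move: h IH; move: (n%:R : rat) => N h IH.
nra.
Qed.

Lemma t1 : (1 : rat) < 397%:R / 100%:R.
Proof. rewrite ltr_pdivlMr; last by rewrite ltr0n. rewrite mul1r ltr_nat. done. Qed.
Lemma t2 : lam <= (397%:R / 100%:R) ^+ 2.
Proof. rewrite /lam expr2. lra. Qed.
Lemma expr_split (a b c : rat) n : c = a * b -> c ^+ n = a ^+ n * b ^+ n.
Proof. by move=> ->; rewrite exprMn. Qed.
Lemma t3 n : (397%:R / 100%:R : rat) ^+ n = (397%:R / 200%:R) ^+ n * 2%:R ^+ n.
Proof. apply: expr_split. field. exact: isT. Qed.
Lemma t4 n : (199%:R / 100%:R : rat) ^+ n = (397%:R / 200%:R) ^+ n * (398%:R / 397%:R) ^+ n.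
Proof. apply: expr_split. field. exact: isT. Qed.
Lemma pow_mono (x : rat) a b : 1 < x -> (a <= b)%N -> x ^+ a <= x ^+ b.
Proof. by move=> x1 ab; rewrite ler_eXn2l. Qed.
Lemma pow_sq (x y : rat) m : 0 <= x -> x <= y ^+ 2 -> x ^+ m <= y ^+ (2 * m).
Proof.
move=> x0 xy; rewrite exprM; apply: lerXn2r; rewrite ?nnegrE //.
exact: le_trans xy.
Qed.
Lemma t5 n : lam ^+ (n %/ 2) <= (397%:R / 100%:R) ^+ n.
Proof.
apply: le_trans (@pow_sq _ _ (n %/ 2) lam_ge0 t2) _.
apply: pow_mono; first exact: t1.
have := leq_trunc_div n 2; lia.
Qed.
Lemma final_arith (g c L Q B : rat) (n : nat) :
  g <= c / 2%:R ^+ n.+1 ->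
  c <= 2%:R ^+ n.+1 + n.+1%:R * (16%:R * L) ->
  L <= Q * 2%:R ^+ n ->
  1 + n%:R / 397%:R <= B ->
  0 <= Q -> 0 <= L -> 1 <= Q * B ->
  g <= 3177%:R * (Q * B).
Proof.
rewrite exprS.
have P0 : (0 : rat) < 2%:R ^+ n by apply: exprn_gt0; rewrite ltr0n.
move: P0; move: (2%:R ^+ n : rat) => P P0 g1 g2 hl hb Q0 L0 W1.
have k0 : (0 : rat) <= n%:R by exact: ler0n.
have e : (n.+1%:R : rat) = n%:R + 1 by rewrite natr1.
rewrite e in g2.
move: k0 g2 hb; move: (n%:R : rat) => k k0 g2 hb.
have hk : k + 1 <= 397%:R * B by lra.
have h1 : (k + 1) * (16%:R * L) <= (397%:R * B) * (16%:R * (Q * P)).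
  apply: ler_pM; [lra | nra | exact: hk | ].
  apply: ler_wpM2l; [lra | exact: hl].
have h3 : 2%:R * P <= 2%:R * (Q * B) * P by nra.
have h2 : c <= 6354%:R * (Q * B) * P by lra.
apply: le_trans g1 _.
rewrite ler_pdivrMr; last by nra.
nra.
Qed.
Lemma le_eq_r (x y z : rat) : x <= y -> y = z -> x <= z.
Proof. by move=> h <-. Qed.
Lemma t6 : (1 : rat) <= 199%:R / 100%:R.
Proof. rewrite ler_pdivlMr; last by rewrite ltr0n. rewrite mul1r ler_nat. done. Qed.
Lemma main_rat n : gtilde n <= 3177%:R * (199%:R / 100%:R) ^+ n.
Proof.
rewrite (t4 n).
apply: (@final_arith _ _ _ _ _ n (gtilde_le n) (good_bound n)).
- exact: le_eq_r (t5 n) (t3 n).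
- exact: bernoulli n.
- apply: exprn_ge0; apply: divr_ge0; exact: ler0n.
- apply: exprn_ge0; exact: lam_ge0.
- exact: le_eq_r (exprn_ege1 n t6) (t4 n).
Qed.


Lemma ratr_form (R : realType) (c p q : nat) n :
  ratr (c%:R * (p%:R / q%:R) ^+ n : rat) = (c%:R * (p%:R / q%:R) ^+ n : R).
Proof. by rewrite rmorphM rmorphXn fmorph_div !rmorph_nat. Qed.
Lemma le_eq_R (R : realType) (x y z : R) : x <= y -> y = z -> x <= z.
Proof. by move=> h <-. Qed.
Lemma const_eq (R : realType) : (199%:R / 100%:R : R) = 2 - 1 / 100%:R.
Proof. by field. Qed.
Unset Implicit Arguments.
Theorem mainTheorem13 (R : realType) :
  exists (eps C : R), [/\ 0 < eps, 0 < C &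
    forall n : nat, (0 < n)%N -> ratr (gtilde n) <= C * (2 - eps) ^+ n].
Proof.
exists (1 / 100%:R), 3177%:R; split.
- apply: divr_gt0; [exact: ltr01 | exact: ltr0n].
- rewrite ltr0n; exact: isT.
move=> n _.
have H := main_rat n.
have H2 : ratr (gtilde n) <= ratr (3177%:R * (199%:R / 100%:R) ^+ n :> rat) :> R by rewrite ler_rat.
have H3 := @le_eq_R R _ _ _ H2 (ratr_form R 3177 199 100 n).
exact: @le_eq_R R _ _ _ H3 (congr1 (fun x => 3177%:R * x ^+ n) (const_eq R)).
Qed.
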